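(* Let $\mathbb{C}$ be a modified category of interest, $\mathcal{X}=(\partial\colon E\to R)$, $\mathcal{X}'=(\partial'\colon E'\to R')$ crossed modules in $\mathbb{C}$, and $f=(f_1,f_0)$, $g=(g_1,g_0)$, $k=(k_1,k_0)$ crossed module morphisms $\mathcal{X}\to\mathcal{X}'$. Let $s$ be an $f_0$-derivation connecting $f$ to $g$ and $s'$ a $g_0$-derivation connecting $g$ to $k$. Then the map $s+s'\colon R\to E'$, $(s+s')(r)=s(r)+s'(r)$, is an $f_0$-derivation connecting $f$ to $k$.
   Context: A modified category of interest (MCI) is a category $\mathbb{C}$ of groups (written additively) with additional unary and binary operations: $\Omega=\Omega_0\cup\Omega_1\cup\Omega_2$, $\Omega_0=\{0\}$, $\Omega_2'=\Omega_2\setminus\{+\}$ closed under $x*^\circ y=y*x$, with $x*(y+z)=x*y+x*z$, unary operations other than $-$ compatible with $+$ and $*$, $x_1+(x_2*x_3)=(x_2*x_3)+x_1$, and each $(x_1*x_2)\bar*x_3$ expressible as a word in the products $x_i(x_jx_k),(x_jx_k)x_i$, $i\in\{1,2\}$. A derived action of $R$ on $E$ consists of maps $r\cdot e=\sigma(r)+e-\sigma(r)$, $r*e=\sigma(r)*e$ ($*\in\Omega_2'$) induced by a split extension of $R$ by $E$ with section $\sigma$. A crossed module is a morphism $\partial\colon E\to R$ with a derived action satisfying $\partial(r\cdot e)=r+\partial(e)-r$, $\partial(r*e)=r*\partial(e)$, $\partial(e)\cdot e'=e+e'-e$, $\partial(e)*e'=e*e'$. A crossed module morphism $(f_1,f_0)$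 satisfies $\partial'f_1=f_0\partial$, $f_1(r\cdot e)=f_0(r)\cdot f_1(e)$, $f_1(r*e)=f_0(r)*f_1(e)$. For a morphism $f_0\colon R\to R'$, an $f_0$-derivation is a map $s\colon R\to E'$ with $s(g+h)=\big(f_0(-h)\cdot s(g)\big)+s(h)$ and $s(g*h)=f_0(g)*s(h)+f_0(h)*^\circ s(g)+s(g)*s(h)$ for all $g,h\in R$, $*\in\Omega_2'$. An $f_0$-derivation $s$ connects $f$ to $g$ if $g_0(r)=f_0(r)+\partial'(s(r))$ and $g_1(e)=f_1(e)+s(\partial(e))$ for all $r\in R$, $e\in E$. *)

(* Defs.v *)
Set Implicit Arguments.
Unset Strict Implicit.

(** * Signature of a modified category of interest.
    [Op1] = Omega_1' (unary operations other than -),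
    [Op2] = Omega_2' = Omega_2 \ {+}, closed under the opposite operation
    [opc o] = o^circ (x o^circ y = y o x). *)
Record Sig := { Op1 : Type; Op2 : Type; opc : Op2 -> Op2 }.

(** Groups (written additively, not necessarily abelian) with the extra
    operations of the signature. *)
Record OGroup (Sg : Sig) := {
  carrier :> Type;
  zero : carrier;
  add : carrier -> carrier -> carrier;
  opp : carrier -> carrier;
  un : Op1 Sg -> carrier -> carrier;
  bin : Op2 Sg -> carrier -> carrier -> carrier }.

Arguments zero {Sg} _.
Arguments add {Sg _} _ _.
Arguments opp {Sg _} _.
Arguments un {Sg _} _ _.
Arguments bin {Sg _} _ _ _.

Declare Scope og_scope.
Delimit Scope og_scope with og.
Notation "x + y" := (add x y) : og_scope.
Notation "- x" := (opp x) : og_scope.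
Notation "x - y" := (add x (opp y)) : og_scope.
Open Scope og_scope.

Definition mci_object_axioms (Sg : Sig) (A : OGroup Sg) : Prop :=
  (forall x y z : A, x + (y + z) = (x + y) + z) /\
  (forall x : A, zero A + x = x) /\
  (forall x : A, x + zero A = x) /\
  (forall x : A, - x + x = zero A) /\
  (forall x : A, x + - x = zero A) /\
  (forall (o : Op2 Sg) (x y : A), bin (opc o) x y = bin o y x) /\
  (forall (o : Op2 Sg) (x y z : A), bin o x (y + z) = bin o x y + bin o x z) /\
  (forall (w : Op1 Sg) (x y : A), un w (x + y) = un w x + un w y) /\
  (forall (w : Op1 Sg) (o : Op2 Sg) (x y : A), un w (bin o x y) = bin o (un w x) y) /\
  (forall (o : Op2 Sg) (x1 x2 x3 : A), x1 + bin o x2 x3 = bin o x2 x3 + x1).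

(** Words in the products x_i (x_j x_k), (x_j x_k) x_i with i in {1,2} and
    {j,k} = {1,2,3} \ {i}. A leaf [wleaf i2 sw right o1 o2] denotes, with
    a := x_i (i = 2 iff i2), (b, c) the two other variables in increasing
    order (swapped iff sw):  a o1 (b o2 c)  if ~~right,  (b o2 c) o1 a  if right. *)
Inductive word (Sg : Sig) : Type :=
| wzero : word Sg
| wadd : word Sg -> word Sg -> word Sg
| wopp : word Sg -> word Sg
| wleaf : bool -> bool -> bool -> Op2 Sg -> Op2 Sg -> word Sg.

Fixpoint weval (Sg : Sig) (A : OGroup Sg) (x1 x2 x3 : A) (W : word Sg) : A :=
  match W with
  | wzero _ => zero A
  | wadd W1 W2 => weval x1 x2 x3 W1 + weval x1 x2 x3 W2
  | wopp W1 => - weval x1 x2 x3 W1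
  | wleaf i2 sw rt o1 o2 =>
      let a := if i2 then x2 else x1 in
      let b0 := if i2 then x1 else x2 in
      let b := if sw then x3 else b0 in
      let c := if sw then b0 else x3 in
      if rt then bin o1 (bin o2 b c) a else bin o1 a (bin o2 b c)
  end.

(** A modified category of interest: a class of Omega-groups (its objects)
    satisfying the axioms above, including the word axiom
    (x1 * x2) *bar x3 = W(...) uniformly over the class. *)
Record MCI (Sg : Sig) := {
  inC : OGroup Sg -> Prop;
  inC_axioms : forall A, inC A -> mci_object_axioms A;
  inC_word : forall o ob : Op2 Sg, exists W : word Sg,
      forall A, inC A -> forall x1 x2 x3 : A,
        bin ob (bin o x1 x2) x3 = weval x1 x2 x3 W }.

Definition hom (Sg : Sig) (A B : OGroup Sg) (f : A -> B) : Prop :=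
  f (zero A) = zero B /\
  (forall x y, f (x + y) = f x + f y) /\
  (forall x, f (- x) = - f x) /\
  (forall w x, f (un w x) = un w (f x)) /\
  (forall o x y, f (bin o x y) = bin o (f x) (f y)).

Definition split_ext (Sg : Sig) (C : MCI Sg) (R E B : OGroup Sg)
    (i : E -> B) (p : B -> R) (sigma : R -> B) : Prop :=
  inC C E /\ inC C R /\ inC C B /\
  hom i /\ hom p /\ hom sigma /\
  (forall e e', i e = i e' -> e = e') /\
  (forall b, p b = zero R <-> exists e, i e = b) /\
  (forall r, p (sigma r) = r).

Definition derived_action (Sg : Sig) (C : MCI Sg) (R E : OGroup Sg)
    (act : R -> E -> E) (bact : Op2 Sg -> R -> E -> E) : Prop :=
  exists (B : OGroup Sg) (i : E -> B) (p : B -> R) (sigma : R -> B),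
    split_ext C i p sigma /\
    (forall r e, i (act r e) = sigma r + i e - sigma r) /\
    (forall o r e, i (bact o r e) = bin o (sigma r) (i e)).

Definition crossed_module (Sg : Sig) (C : MCI Sg) (E R : OGroup Sg)
    (d : E -> R) (act : R -> E -> E) (bact : Op2 Sg -> R -> E -> E) : Prop :=
  hom d /\ derived_action C act bact /\
  (forall r e, d (act r e) = r + d e - r) /\
  (forall o r e, d (bact o r e) = bin o r (d e)) /\
  (forall e e', act (d e) e' = e + e' - e) /\
  (forall o e e', bact o (d e) e' = bin o e e').

Definition cm_morphism (Sg : Sig) (E R E' R' : OGroup Sg)
    (d : E -> R) (act : R -> E -> E) (bact : Op2 Sg -> R -> E -> E)
    (d' : E' -> R') (act' : R' -> E' -> E') (bact' : Op2 Sg -> R' -> E' -> E')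
    (f1 : E -> E') (f0 : R -> R') : Prop :=
  hom f1 /\ hom f0 /\
  (forall e, d' (f1 e) = f0 (d e)) /\
  (forall r e, f1 (act r e) = act' (f0 r) (f1 e)) /\
  (forall o r e, f1 (bact o r e) = bact' o (f0 r) (f1 e)).

Definition derivation (Sg : Sig) (R E' R' : OGroup Sg)
    (act' : R' -> E' -> E') (bact' : Op2 Sg -> R' -> E' -> E')
    (f0 : R -> R') (s : R -> E') : Prop :=
  (forall g h, s (g + h) = act' (f0 (- h)) (s g) + s h) /\
  (forall o g h, s (bin o g h) =
      bact' o (f0 g) (s h) + bact' (opc o) (f0 h) (s g) + bin o (s g) (s h)).

Definition connects (Sg : Sig) (E R E' R' : OGroup Sg)
    (d : E -> R) (d' : E' -> R') (s : R -> E')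
    (f1 : E -> E') (f0 : R -> R') (g1 : E -> E') (g0 : R -> R') : Prop :=
  (forall r, g0 r = f0 r + d' (s r)) /\
  (forall e, g1 e = f1 e + s (d e)).

(* Main.v *)
Require Import Defs.
Set Implicit Arguments.
Open Scope og_scope.

Lemma gA (Sg : Sig) (A : OGroup Sg) (HA : mci_object_axioms A) (x y z : A) :
  x + (y + z) = (x + y) + z.
Proof. destruct HA as (H&_); apply H. Qed.
Lemma g0l (Sg : Sig) (A : OGroup Sg) (HA : mci_object_axioms A) (x : A) : zero A + x = x.
Proof. destruct HA as (_&H&_); apply H. Qed.
Lemma g0r (Sg : Sig) (A : OGroup Sg) (HA : mci_object_axioms A) (x : A) : x + zero A = x.
Proof. destruct HA as (_&_&H&_); apply H. Qed.
Lemma gNl (Sg : Sig) (A : OGroup Sg) (HA : mci_object_axioms A) (x : A) : - x + x = zero A.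
Proof. destruct HA as (_&_&_&H&_); apply H. Qed.
Lemma gNr (Sg : Sig) (A : OGroup Sg) (HA : mci_object_axioms A) (x : A) : x + - x = zero A.
Proof. destruct HA as (_&_&_&_&H&_); apply H. Qed.
Lemma gopc (Sg : Sig) (A : OGroup Sg) (HA : mci_object_axioms A) o (x y : A) :
  bin (opc o) x y = bin o y x.
Proof. destruct HA as (_&_&_&_&_&H&_); apply H. Qed.
Lemma gDr (Sg : Sig) (A : OGroup Sg) (HA : mci_object_axioms A) o (x y z : A) :
  bin o x (y + z) = bin o x y + bin o x z.
Proof. destruct HA as (_&_&_&_&_&_&H&_); apply H. Qed.
Lemma gcent (Sg : Sig) (A : OGroup Sg) (HA : mci_object_axioms A) o (x1 x2 x3 : A) :
  x1 + bin o x2 x3 = bin o x2 x3 + x1.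
Proof. destruct HA as (_&_&_&_&_&_&_&_&_&H); apply H. Qed.
Lemma gDl (Sg : Sig) (A : OGroup Sg) (HA : mci_object_axioms A) o (x y z : A) :
  bin o (x + y) z = bin o x z + bin o y z.
Proof. rewrite <- !(gopc HA o z), (gDr HA). reflexivity. Qed.
Lemma gKl (Sg : Sig) (A : OGroup Sg) (HA : mci_object_axioms A) (x y : A) : - x + (x + y) = y.
Proof. rewrite (gA HA), (gNl HA), (g0l HA). reflexivity. Qed.
Lemma gKr (Sg : Sig) (A : OGroup Sg) (HA : mci_object_axioms A) (x y : A) : x + (- x + y) = y.
Proof. rewrite (gA HA), (gNr HA), (g0l HA). reflexivity. Qed.
Lemma gcancel (Sg : Sig) (A : OGroup Sg) (HA : mci_object_axioms A) (x y z : A) :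
  x + y = x + z -> y = z.
Proof. intro H. rewrite <- (gKl HA x y), H, (gKl HA). reflexivity. Qed.
Lemma guniqN (Sg : Sig) (A : OGroup Sg) (HA : mci_object_axioms A) (x y : A) :
  x + y = zero A -> y = - x.
Proof. intro H. apply (gcancel HA x). rewrite H, (gNr HA). reflexivity. Qed.
Lemma gN0 (Sg : Sig) (A : OGroup Sg) (HA : mci_object_axioms A) : - zero A = zero A.
Proof. symmetry. apply (guniqN HA). apply (g0l HA). Qed.
Lemma gNN (Sg : Sig) (A : OGroup Sg) (HA : mci_object_axioms A) (x : A) : - - x = x.
Proof. symmetry. apply (guniqN HA). apply (gNl HA). Qed.
Lemma gND (Sg : Sig) (A : OGroup Sg) (HA : mci_object_axioms A) (x y : A) :
  - (x + y) = - y + - x.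
Proof. symmetry. apply (guniqN HA). rewrite <- (gA HA), (gA HA y), (gNr HA), (g0l HA), (gNr HA).
  reflexivity. Qed.
Lemma gidem (Sg : Sig) (A : OGroup Sg) (HA : mci_object_axioms A) (x : A) :
  x = x + x -> x = zero A.
Proof. intro H. apply (gcancel HA x). rewrite (g0r HA). symmetry; exact H. Qed.

Lemma hom_pack (Sg : Sig) (A B : OGroup Sg) (f : A -> B) : hom f ->
  f (zero A) = zero B /\ (forall x y, f (x + y) = f x + f y) /\ (forall x, f (- x) = - f x)
  /\ (forall o x y, f (bin o x y) = bin o (f x) (f y)).
Proof. intros (?&?&?&?&?); tauto. Qed.

Lemma da_props (Sg : Sig) (C : MCI Sg) (R E : OGroup Sg)
    (act : R -> E -> E) (bact : Op2 Sg -> R -> E -> E) :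
  derived_action C act bact ->
  mci_object_axioms R /\ mci_object_axioms E /\
  (forall r e1 e2, act r (e1 + e2) = act r e1 + act r e2) /\
  (forall r1 r2 e, act (r1 + r2) e = act r1 (act r2 e)) /\
  (forall e, act (zero R) e = e) /\
  (forall r e, act r (- e) = - act r e) /\
  (forall o r1 r2 e, bact o (r1 + r2) e = bact o r1 e + bact o r2 e) /\
  (forall o r e1 e2, bact o r (e1 + e2) = bact o r e1 + bact o r e2) /\
  (forall o r e x, x + bact o r e = bact o r e + x).
Proof.
  intros (B & i & p & sg & (HE & HR & HB & Hi & Hp & Hs & Hinj & _ & _) & Ha & Hb).
  pose proof (inC_axioms HE) as AE. pose proof (inC_axioms HR) as AR.
  pose proof (inC_axioms HB) as AB.
  apply hom_pack in Hi. destruct Hi as (i0 & iD & iN & iB).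
  apply hom_pack in Hs. destruct Hs as (s0 & sD & sN & sB).
  assert (adr : forall r e1 e2, act r (e1 + e2) = act r e1 + act r e2).
  { intros. apply Hinj. rewrite iD, !Ha, iD. rewrite <- !(gA AB).
    rewrite (gKl AB). reflexivity. }
  split; [exact AR|]. split; [exact AE|]. split; [exact adr|].
  split.
  { intros. apply Hinj. rewrite !Ha, sD, (gND AB). rewrite <- !(gA AB). reflexivity. }
  split.
  { intros. apply Hinj. rewrite Ha, s0, (gN0 AB), (g0l AB), (g0r AB). reflexivity. }
  split.
  { intros r e. apply (guniqN AE). rewrite <- adr, (gNr AE). apply Hinj.
    rewrite Ha, !i0. rewrite <- (gA AB), (g0l AB), (gNr AB). reflexivity. }
  split.
  { intros. apply Hinj. rewrite iD, !Hb, sD, (gDl AB). reflexivity. }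
  split.
  { intros. apply Hinj. rewrite iD, !Hb, iD, (gDr AB). reflexivity. }
  { intros. apply Hinj. rewrite !iD, Hb, (gcent AB). reflexivity. }
Qed.

Lemma sw (Sg : Sig) (A : OGroup Sg) (HA : mci_object_axioms A) (x y z : A) :
  x + y = y + x -> x + (y + z) = y + (x + z).
Proof. intro H. rewrite !(gA HA), H. reflexivity. Qed.

Theorem mainTheorem4 (Sg : Sig) (C : MCI Sg) (E R E' R' : OGroup Sg)
  (d : E -> R) (act : R -> E -> E) (bact : Op2 Sg -> R -> E -> E)
  (d' : E' -> R') (act' : R' -> E' -> E') (bact' : Op2 Sg -> R' -> E' -> E')
  (f1 g1 k1 : E -> E') (f0 g0 k0 : R -> R') (s s' : R -> E') :
  crossed_module C d act bact ->
  crossed_module C d' act' bact' ->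
  cm_morphism d act bact d' act' bact' f1 f0 ->
  cm_morphism d act bact d' act' bact' g1 g0 ->
  cm_morphism d act bact d' act' bact' k1 k0 ->
  derivation act' bact' f0 s -> connects d d' s f1 f0 g1 g0 ->
  derivation act' bact' g0 s' -> connects d d' s' g1 g0 k1 k0 ->
  derivation act' bact' f0 (fun r => (s r + s' r)%og) /\
  connects d d' (fun r => (s r + s' r)%og) f1 f0 k1 k0.
Proof.
  intros (_ & HdaX & _) (Hd' & Hda & _ & _ & Hdact & Hdbact) (_ & Hf0 & _) _ _
    (sD & sB) (cg0 & cg1) (s'D & s'B) (ck0 & ck1).
  destruct (da_props HdaX) as (AR & _).
  destruct (da_props Hda) as (AR' & AE' & adr & adl & a0 & aN & bdl & bdr & bc).
  apply hom_pack in Hd'. destruct Hd' as (d0 & dD & dN & _).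
  apply hom_pack in Hf0. destruct Hf0 as (f00 & f0D & f0N & _).
  assert (s0 : s (zero R) = zero E').
  { apply (gidem AE'). transitivity (s (zero R + zero R)).
    { rewrite (g0l AR). reflexivity. } rewrite sD.
    rewrite (gN0 AR), f00, a0. reflexivity. }
  assert (sNh : forall h, act' (f0 (- h)) (s (- h)) = - s h).
  { intro h. assert (H : act' (f0 (- h)) (s (- h)) + s h = zero E').
    { rewrite <- sD, (gNl AR). exact s0. }
    rewrite <- (g0r AE' (act' _ _)), <- (gNr AE' (s h)), (gA AE'), H, (g0l AE').
    reflexivity. }
  split; [split|split].
  - intros g h. rewrite sD, s'D, cg0, adl, Hdact, !adr, aN, sNh, (gNN AE').
    rewrite <- !(gA AE'). rewrite (gKr AE'). reflexivity.
  - intros o g h. rewrite sB, s'B, cg0, cg0, !bdl, Hdbact, Hdbact, (gopc AE').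
    rewrite !bdr, (gDl AE'), (gDr AE'), (gDr AE').
    set (a := bact' o (f0 g) (s h)). set (b := bact' (opc o) (f0 h) (s g)).
    set (c := bin o (s g) (s h)). set (d1 := bact' o (f0 g) (s' h)).
    set (e := bin o (s g) (s' h)). set (f := bact' (opc o) (f0 h) (s' g)).
    set (g' := bin o (s' g) (s h)). set (h' := bin o (s' g) (s' h)).
    rewrite <- !(gA AE').
    rewrite (sw AE' c d1 _ (bc _ _ _ _)), (sw AE' b d1 _ (bc _ _ _ _)),
      (sw AE' e f _ (bc _ _ _ _)), (sw AE' c f _ (bc _ _ _ _)).
    reflexivity.
  - intro r. rewrite ck0, cg0, dD, (gA AR'). reflexivity.
  - intro e. rewrite ck1, cg1, (gA AE'). reflexivity.
Qed.
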